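(* Fix spins $j_1,\dots,j_4$ with $J=\sum_i j_i\in\mathbb{Z}$. For admissible $(S,T)$, with $k_{ij}=k_{ij}(j_i,S,T)$, $$2J_1\cdot J_2\,|S,T\rangle=\big(S(S+1)-j_1(j_1+1)-j_2(j_2+1)\big)|S,T\rangle+\big((k_{14}+1)(k_{23}+1)|S,T+1\rangle-k_{14}k_{23}|S,T\rangle\big)+\big((k_{13}+1)(k_{24}+1)|S,T-1\rangle-k_{13}k_{24}|S,T\rangle\big).$$ In particular $J_1\cdot J_2$ does not change the value of $S$. Similarly, $J_1\cdot J_3|S,T\rangle$ is a linear combination of states $|S',T\rangle$ with the same $T$.
   Context: $(z_i|S,T\rangle=\prod_{i<j}[z_i|z_j\rangle^{k_{ij}}/k_{ij}!$ is a holomorphic function of $z_1,\dots,z_4\in\mathbb{C}^2$, where $[z|w\rangle=z_0w_1-z_1w_0$. Here $U=J-S-T$ and $k_{12}=j_1+j_2-S$, $k_{34}=j_3+j_4-S$, $k_{13}=j_1+j_3-T$, $k_{24}=j_2+j_4-T$, $k_{14}=j_1+j_4-U$, $k_{23}=j_2+j_3-U$. $(S,T)$ is admissible iff all $k_{ij}\ge0$, and $|S,T\rangle:=0$ if $(S,T)$ is not admissible. The operators act on holomorphic functions of $(z_1,\dots,z_4)$ by $$E_{ij}=\sum_{A=0,1}z_i^A\frac{\partial}{\partial z_j^A},\qquad 2J_i\cdot J_j:=E_{ij}E_{ji}-\tfrac12E_{ii}E_{jj}-E_{ii}.$$ *)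

(* Defs.v *)
(* states are polynomials ({mpoly R[8]}) in the 8 complex
   coordinates z_i^A (i < 4, A < 2); operators are formal differential
   operators, which agree with holomorphic derivatives on polynomials. *)
From HB Require Import structures.
From mathcomp Require Import all_boot all_order all_algebra.
From mathcomp Require Import mpoly.
Set Implicit Arguments. Unset Strict Implicit. Unset Printing Implicit Defensive.
Import Order.TTheory GRing.Theory Num.Theory.
Local Open Scope ring_scope.

(* index of the coordinate z_i^A, with i in {0..3} (spin label i+1) and A in {0,1} *)
Definition zidx (i : 'I_4) (A : 'I_2) : 'I_8 := inord (2 * i + A).

Section Ops.
Variable R : numFieldType.

Definition zv (i : 'I_4) (A : 'I_2) : {mpoly R[8]} := 'X_(zidx i A).

Definition brk (i j : 'I_4) : {mpoly R[8]} :=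
  zv i 0 * zv j 1 - zv i 1 * zv j 0.

Definition Eop (i j : 'I_4) (p : {mpoly R[8]}) : {mpoly R[8]} :=
  zv i 0 * mderiv (zidx j 0) p + zv i 1 * mderiv (zidx j 1) p.

Definition twoJJ (i j : 'I_4) (p : {mpoly R[8]}) : {mpoly R[8]} :=
  Eop i j (Eop j i p) - 2^-1 *: Eop i i (Eop j j p) - Eop i i p.
End Ops.

(* Spins j1..j4, S, T are rationals (half-integers in practice). *)
Definition Utot (j1 j2 j3 j4 S T : rat) : rat := (j1 + j2 + j3 + j4) - S - T.
Definition k12 (j1 j2 j3 j4 S T : rat) : rat := j1 + j2 - S.
Definition k34 (j1 j2 j3 j4 S T : rat) : rat := j3 + j4 - S.
Definition k13 (j1 j2 j3 j4 S T : rat) : rat := j1 + j3 - T.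
Definition k24 (j1 j2 j3 j4 S T : rat) : rat := j2 + j4 - T.
Definition k14 (j1 j2 j3 j4 S T : rat) : rat := j1 + j4 - Utot j1 j2 j3 j4 S T.
Definition k23 (j1 j2 j3 j4 S T : rat) : rat := j2 + j3 - Utot j1 j2 j3 j4 S T.

Definition admissible (j1 j2 j3 j4 S T : rat) : bool :=
  [&& k12 j1 j2 j3 j4 S T \is a Num.nat, k34 j1 j2 j3 j4 S T \is a Num.nat,
      k13 j1 j2 j3 j4 S T \is a Num.nat, k24 j1 j2 j3 j4 S T \is a Num.nat,
      k14 j1 j2 j3 j4 S T \is a Num.nat & k23 j1 j2 j3 j4 S T \is a Num.nat].

Definition bfac (R : numFieldType) (a b : 'I_4) (k : rat) : {mpoly R[8]} :=
  ((Num.truncn k)`!%:R)^-1 *: (brk R a b) ^+ (Num.truncn k).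

Definition state (R : numFieldType) (j1 j2 j3 j4 S T : rat) : {mpoly R[8]} :=
  if admissible j1 j2 j3 j4 S T then
    bfac R 0 1 (k12 j1 j2 j3 j4 S T) * bfac R 2 3 (k34 j1 j2 j3 j4 S T) *
    bfac R 0 2 (k13 j1 j2 j3 j4 S T) * bfac R 1 3 (k24 j1 j2 j3 j4 S T) *
    bfac R 0 3 (k14 j1 j2 j3 j4 S T) * bfac R 1 2 (k23 j1 j2 j3 j4 S T)
  else 0.

(* Main.v *)
Require Import Defs.
From HB Require Import structures.
From mathcomp Require Import all_boot all_order all_algebra.
From mathcomp Require Import mpoly.
From mathcomp Require Import ring lra zify.
Import Order.TTheory GRing.Theory Num.Theory.
Local Open Scope ring_scope.

Section S.
Variable R : numFieldType.
Local Notation P := {mpoly R[8]}.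

Lemma dX (i j : 'I_8) : mderiv j ('X_i : P) = (i == j)%:R.
Proof.
rewrite mderivX mnm1E; case: eqP => [->|_]; last by rewrite scale0r.
have -> : (U_(j) - U_(j) = 0)%MM by apply/mnmP => k; rewrite mnmBE subnn mnm0E.
by rewrite mpolyX0 scale1r.
Qed.

Lemma zidxE k A j B : (zidx k A == zidx j B) = ((k == j) && (A == B)).
Proof.
have vz : forall (k : 'I_4) (A : 'I_2), val (zidx k A) = (2 * k + A)%N.
  move=> kk AA; rewrite /zidx /= inordK //.
  by have := ltn_ord kk; have := ltn_ord AA; lia.
rewrite -val_eqE !vz -!val_eqE /=.
have := ltn_ord A; have := ltn_ord B.
case: (eqVneq (val k) (val j)) => [->|ne] /=.
  by move=> *; apply/eqP/eqP; lia.
move=> *; apply/negbTE/eqP; move: ne => /= /eqP ne; lia.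
Qed.

Lemma Eop_zv i j k A : Eop i j (zv R k A) = (j == k)%:R * zv R i A.
Proof.
rewrite /Eop /zv !dX !zidxE.
case: (eqVneq k j) => [_|_] /=; last by rewrite !mulr0 addr0 mul0r.
have [->|->] : A = 0 \/ A = 1.
  by case: A => [[|[|//]] hA]; [left|right]; apply/val_inj.
  by rewrite /= mulr1 mulr0 addr0 mul1r.
by rewrite /= mulr1 mulr0 add0r mul1r.
Qed.

Lemma Eop_add i j (p q : P) : Eop i j (p + q) = Eop i j p + Eop i j q.
Proof. rewrite /Eop !mderivD; ring. Qed.
Lemma Eop_sub i j (p q : P) : Eop i j (p - q) = Eop i j p - Eop i j q.
Proof. rewrite /Eop !mderivB; ring. Qed.
Lemma Eop_scale i j (k : R) (p : P) : Eop i j (k *: p) = k *: Eop i j p.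
Proof. by rewrite /Eop !mderivZ scalerDr !scalerAr. Qed.
Lemma Eop_mul i j (p q : P) : Eop i j (p * q) = Eop i j p * q + p * Eop i j q.
Proof. rewrite /Eop !mderivM; ring. Qed.
Lemma Eop_one i j : Eop i j (1 : P) = 0.
Proof.
have := Eop_mul i j 1 1; rewrite !mul1r mulr1 => h.
by apply: (addrI (Eop i j 1)); rewrite addr0 -h.
Qed.
Lemma Eop_exp i j (p : P) n : Eop i j (p ^+ n) = n%:R * p ^+ n.-1 * Eop i j p.
Proof.
elim: n => [|n IH]; first by rewrite expr0 mul0r mul0r Eop_one.
rewrite exprS Eop_mul IH; case: n {IH} => [|n] /=; rewrite ?exprS ?expr0 -?natr1; ring.
Qed.
Lemma Eop_brk i j a b : Eop i j (brk R a b) = (j == a)%:R * brk R i b + (j == b)%:R * brk R a i.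
Proof. rewrite /brk Eop_sub !Eop_mul !Eop_zv; ring. Qed.

End S.

Section S.
Variable R : numFieldType.
Local Notation P := {mpoly R[8]}.

Lemma brk_ii i : brk R i i = 0.
Proof. rewrite /brk; ring. Qed.
Lemma brk_swap i j : brk R i j = - brk R j i.
Proof. rewrite /brk; ring. Qed.

Lemma scale_natr n (p : P) : (n%:R : R) *: p = n%:R * p.
Proof. by rewrite scaler_nat mulr_natl. Qed.

Ltac fin := rewrite ?brk_ii ?(brk_swap 1 0) ?(brk_swap 2 0) ?(brk_swap 2 1)
  ?(brk_swap 3 0) ?(brk_swap 3 1) ?(brk_swap 3 2) ?scale_natr ?exprS;
  move: (brk R 0 1) (brk R 2 3) (brk R 0 2) (brk R 1 3) (brk R 0 3) (brk R 1 2) => x1 x2 x3 x4 x5 x6; ring.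

Definition mono (a b c d e f : nat) : P :=
  brk R 0 1 ^+ a * brk R 2 3 ^+ b * brk R 0 2 ^+ c * brk R 1 3 ^+ d *
  brk R 0 3 ^+ e * brk R 1 2 ^+ f.

Lemma E10 a b c d e f : Eop 1 0 (mono a b c d e f) =
  c%:R *: mono a b c.-1 d e f.+1 + e%:R *: mono a b c d.+1 e.-1 f.
Proof.
rewrite /mono !Eop_mul !Eop_exp !Eop_brk /=.
fin.
Qed.
Lemma Eop_opp i j (p : P) : Eop i j (- p) = - Eop i j p.
Proof. by rewrite -scaleN1r Eop_scale scaleN1r. Qed.

Lemma E01 a b c d e f : Eop 0 1 (mono a b c d e f) =
  f%:R *: mono a b c.+1 d e f.-1 + d%:R *: mono a b c d.-1 e.+1 f.
Proof. rewrite /mono !Eop_mul !Eop_exp !Eop_brk /=. fin. Qed.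

Lemma E20 a b c d e f : Eop 2 0 (mono a b c d e f) =
  - (a%:R *: mono a.-1 b c d e f.+1) + e%:R *: mono a b.+1 c d e.-1 f.
Proof. rewrite /mono !Eop_mul !Eop_exp !Eop_brk /=. fin. Qed.

Lemma E02 a b c d e f : Eop 0 2 (mono a b c d e f) =
  - (f%:R *: mono a.+1 b c d e f.-1) + b%:R *: mono a b.-1 c d e.+1 f.
Proof. rewrite /mono !Eop_mul !Eop_exp !Eop_brk /=. fin. Qed.

Definition wt (i x y : 'I_4) : nat := ((i == x) + (i == y))%N.

Lemma Eii_brk i x y n : Eop i i (brk R x y ^+ n) = (n * wt i x y)%:R *: brk R x y ^+ n.
Proof.
elim: n => [|n IH]; first by rewrite expr0 Eop_one mul0n scale0r.
rewrite exprS Eop_mul IH Eop_brk /wt.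
case: (eqVneq i x) => [<-|nix]; case: (eqVneq i y) => [<-|niy];
  rewrite ?eqxx ?(negbTE nix) ?(negbTE niy) /= ?brk_ii ?scale_natr -?natr1 ?natrD ?natrM; ring.
Qed.

Lemma Eii i a b c d e f : Eop i i (mono a b c d e f) =
  (a * wt i 0 1 + b * wt i 2 3 + c * wt i 0 2 + d * wt i 1 3 + e * wt i 0 3 + f * wt i 1 2)%:R
   *: mono a b c d e f.
Proof.
rewrite /mono !Eop_mul !Eii_brk !scale_natr !natrD.
move: (_ ^+ a) (_ ^+ b) (_ ^+ c) (_ ^+ d) (_ ^+ e) (_ ^+ f) => ?????? ; ring.
Qed.
Ltac toP := rewrite -!mul_mpolyC ?(rmorphB, rmorphD, rmorphN, rmorphM, mpolyC_nat).

Lemma L01 a b c d e f : twoJJ 0 1 (mono a b c d e f) =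
  ((c * f.+1 + e * d.+1)%:R - 2^-1 * ((a + d + f) * (a + c + e))%:R - (a + c + e)%:R) *: mono a b c d e f
  + (c * d)%:R *: mono a b c.-1 d.-1 e.+1 f.+1 + (e * f)%:R *: mono a b c.+1 d.+1 e.-1 f.-1.
Proof.
rewrite /twoJJ E10 Eop_add !Eop_scale !E01 !Eii !Eop_scale Eii /wt /=.
case: c => [|c]; case: e => [|e] /=; toP;
  move: (mono _ _ _ _ _ _) (mono _ _ _ _ _ _) (mono _ _ _ _ _ _) => m1 m2 m3;
  rewrite ?natrD ?natrM -?natr1; ring.
Qed.
Lemma L02 a b c d e f : twoJJ 0 2 (mono a b c d e f) =
  ((a * f.+1 + e * b.+1)%:R - 2^-1 * ((b + c + f) * (a + c + e))%:R - (a + c + e)%:R) *: mono a b c d e f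
  + (- (a * b)%:R) *: mono a.-1 b.-1 c d e.+1 f.+1 + (- (e * f)%:R) *: mono a.+1 b.+1 c d e.-1 f.-1.
Proof.
rewrite /twoJJ E20 Eop_add Eop_opp !Eop_scale !E02 !Eii !Eop_scale Eii /wt /=.
case: a => [|a]; case: e => [|e] /=; toP;
  move: (mono _ _ _ _ _ _) (mono _ _ _ _ _ _) (mono _ _ _ _ _ _) => m1 m2 m3;
  rewrite ?natrD ?natrM -?natr1; ring.
Qed.
End S.

Section S.
Variable R : numFieldType.
Local Notation P := {mpoly R[8]}.

Definition coefN (a b c d e f : nat) : R :=
  (a`!%:R)^-1 * (b`!%:R)^-1 * (c`!%:R)^-1 * (d`!%:R)^-1 * (e`!%:R)^-1 * (f`!%:R)^-1.

Lemma scale_mul (x y : R) (p q : P) : (x *: p) * (y *: q) = (x * y) *: (p * q).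
Proof. by rewrite -scalerAl -scalerAr scalerA. Qed.

Lemma state_mono j1 j2 j3 j4 S T (a b c d e f : nat) :
  k12 j1 j2 j3 j4 S T = a%:R -> k34 j1 j2 j3 j4 S T = b%:R ->
  k13 j1 j2 j3 j4 S T = c%:R -> k24 j1 j2 j3 j4 S T = d%:R ->
  k14 j1 j2 j3 j4 S T = e%:R -> k23 j1 j2 j3 j4 S T = f%:R ->
  state R j1 j2 j3 j4 S T = coefN a b c d e f *: mono R a b c d e f.
Proof.
move=> ha hb hc hd he hf.
rewrite /state /admissible ha hb hc hd he hf !natr_nat /= /bfac !natrK.
by rewrite !scale_mul.
Qed.

Lemma fact_neq0 n : (n`!%:R : R) != 0.
Proof. by rewrite pnatr_eq0 -lt0n fact_gt0. Qed.
Lemma natS_neq0 n : (n.+1%:R : R) != 0.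
Proof. by rewrite pnatr_eq0. Qed.

Lemma coef_cd a b c d e f :
  coefN a b c.+1 d.+1 e f * (c.+1 * d.+1)%:R = coefN a b c d e.+1 f.+1 * (e.+1 * f.+1)%:R.
Proof.
rewrite /coefN !factS !natrM !invfM.
field.
by rewrite !fact_neq0 !(addrC 1) !natr1 !natS_neq0.
Qed.

Lemma coef_ab a b c d e f :
  coefN a.+1 b.+1 c d e f * (a.+1 * b.+1)%:R = coefN a b c d e.+1 f.+1 * (e.+1 * f.+1)%:R.
Proof.
rewrite /coefN !factS !natrM !invfM.
field.
by rewrite !fact_neq0 !(addrC 1) !natr1 !natS_neq0.
Qed.
Lemma state0 j1 j2 j3 j4 S T : ~~ admissible j1 j2 j3 j4 S T -> state R j1 j2 j3 j4 S T = 0.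
Proof. by rewrite /state => /negbTE ->. Qed.

Lemma shiftTp j1 j2 j3 j4 S T (a b c d e f : nat) :
  k12 j1 j2 j3 j4 S T = a%:R -> k34 j1 j2 j3 j4 S T = b%:R ->
  k13 j1 j2 j3 j4 S T = c%:R -> k24 j1 j2 j3 j4 S T = d%:R ->
  k14 j1 j2 j3 j4 S T = e%:R -> k23 j1 j2 j3 j4 S T = f%:R ->
  ratr ((k14 j1 j2 j3 j4 S T + 1) * (k23 j1 j2 j3 j4 S T + 1)) *: state R j1 j2 j3 j4 S (T + 1)
  = (coefN a b c d e f * (c * d)%:R) *: mono R a b c.-1 d.-1 e.+1 f.+1.
Proof.
move=> ha hb hc hd he hf.
rewrite he hf !natr1 -natrM ratr_nat.
case: c hc => [|c] hc.
  have h : k13 j1 j2 j3 j4 S (T + 1) = -1 by move: ha hb hc hd he hf; rewrite /k12 /k34 /k13 /k24 /k14 /k23 /Utot -?natr1 => *; lra.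
  by rewrite state0 ?scaler0 ?mul0n ?muln0 ?mulr0 ?scale0r // /admissible h /= ?andbF.
case: d hd => [|d] hd.
  have h : k24 j1 j2 j3 j4 S (T + 1) = -1 by move: ha hb hc hd he hf; rewrite /k12 /k34 /k13 /k24 /k14 /k23 /Utot -?natr1 => *; lra.
  by rewrite state0 ?scaler0 ?mul0n ?muln0 ?mulr0 ?scale0r // /admissible h /= ?andbF.
have -> : state R j1 j2 j3 j4 S (T + 1) = coefN a b c d e.+1 f.+1 *: mono R a b c d e.+1 f.+1.
  by apply: state_mono; move: ha hb hc hd he hf; rewrite /k12 /k34 /k13 /k24 /k14 /k23 /Utot -?natr1 => *; lra.
by rewrite scalerA coef_cd mulrC.
Qed.

Lemma shiftTm j1 j2 j3 j4 S T (a b c d e f : nat) :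
  k12 j1 j2 j3 j4 S T = a%:R -> k34 j1 j2 j3 j4 S T = b%:R ->
  k13 j1 j2 j3 j4 S T = c%:R -> k24 j1 j2 j3 j4 S T = d%:R ->
  k14 j1 j2 j3 j4 S T = e%:R -> k23 j1 j2 j3 j4 S T = f%:R ->
  ratr ((k13 j1 j2 j3 j4 S T + 1) * (k24 j1 j2 j3 j4 S T + 1)) *: state R j1 j2 j3 j4 S (T - 1)
  = (coefN a b c d e f * (e * f)%:R) *: mono R a b c.+1 d.+1 e.-1 f.-1.
Proof.
move=> ha hb hc hd he hf.
rewrite hc hd !natr1 -natrM ratr_nat.
case: e he => [|e] he.
  have h : k14 j1 j2 j3 j4 S (T - 1) = -1 by move: ha hb hc hd he hf; rewrite /k12 /k34 /k13 /k24 /k14 /k23 /Utot -?natr1 => *; lra.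
  by rewrite state0 ?scaler0 ?mul0n ?muln0 ?mulr0 ?scale0r // /admissible h /= ?andbF.
case: f hf => [|f] hf.
  have h : k23 j1 j2 j3 j4 S (T - 1) = -1 by move: ha hb hc hd he hf; rewrite /k12 /k34 /k13 /k24 /k14 /k23 /Utot -?natr1 => *; lra.
  by rewrite state0 ?scaler0 ?mul0n ?muln0 ?mulr0 ?scale0r // /admissible h /= ?andbF.
have -> : state R j1 j2 j3 j4 S (T - 1) = coefN a b c.+1 d.+1 e f *: mono R a b c.+1 d.+1 e f.
  by apply: state_mono; move: ha hb hc hd he hf; rewrite /k12 /k34 /k13 /k24 /k14 /k23 /Utot -?natr1 => *; lra.
by rewrite scalerA -coef_cd mulrC.
Qed.

Lemma shiftSp j1 j2 j3 j4 S T (a b c d e f : nat) :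
  k12 j1 j2 j3 j4 S T = a%:R -> k34 j1 j2 j3 j4 S T = b%:R ->
  k13 j1 j2 j3 j4 S T = c%:R -> k24 j1 j2 j3 j4 S T = d%:R ->
  k14 j1 j2 j3 j4 S T = e%:R -> k23 j1 j2 j3 j4 S T = f%:R ->
  ratr ((k14 j1 j2 j3 j4 S T + 1) * (k23 j1 j2 j3 j4 S T + 1)) *: state R j1 j2 j3 j4 (S + 1) T
  = (coefN a b c d e f * (a * b)%:R) *: mono R a.-1 b.-1 c d e.+1 f.+1.
Proof.
move=> ha hb hc hd he hf.
rewrite he hf !natr1 -natrM ratr_nat.
case: a ha => [|a] ha.
  have h : k12 j1 j2 j3 j4 (S + 1) T = -1 by move: ha hb hc hd he hf; rewrite /k12 /k34 /k13 /k24 /k14 /k23 /Utot -?natr1 => *; lra.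
  by rewrite state0 ?scaler0 ?mul0n ?muln0 ?mulr0 ?scale0r // /admissible h /= ?andbF.
case: b hb => [|b] hb.
  have h : k34 j1 j2 j3 j4 (S + 1) T = -1 by move: ha hb hc hd he hf; rewrite /k12 /k34 /k13 /k24 /k14 /k23 /Utot -?natr1 => *; lra.
  by rewrite state0 ?scaler0 ?mul0n ?muln0 ?mulr0 ?scale0r // /admissible h /= ?andbF.
have -> : state R j1 j2 j3 j4 (S + 1) T = coefN a b c d e.+1 f.+1 *: mono R a b c d e.+1 f.+1.
  by apply: state_mono; move: ha hb hc hd he hf; rewrite /k12 /k34 /k13 /k24 /k14 /k23 /Utot -?natr1 => *; lra.
by rewrite scalerA coef_ab mulrC.
Qed.

Lemma shiftSm j1 j2 j3 j4 S T (a b c d e f : nat) :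
  k12 j1 j2 j3 j4 S T = a%:R -> k34 j1 j2 j3 j4 S T = b%:R ->
  k13 j1 j2 j3 j4 S T = c%:R -> k24 j1 j2 j3 j4 S T = d%:R ->
  k14 j1 j2 j3 j4 S T = e%:R -> k23 j1 j2 j3 j4 S T = f%:R ->
  ratr ((k12 j1 j2 j3 j4 S T + 1) * (k34 j1 j2 j3 j4 S T + 1)) *: state R j1 j2 j3 j4 (S - 1) T
  = (coefN a b c d e f * (e * f)%:R) *: mono R a.+1 b.+1 c d e.-1 f.-1.
Proof.
move=> ha hb hc hd he hf.
rewrite ha hb !natr1 -natrM ratr_nat.
case: e he => [|e] he.
  have h : k14 j1 j2 j3 j4 (S - 1) T = -1 by move: ha hb hc hd he hf; rewrite /k12 /k34 /k13 /k24 /k14 /k23 /Utot -?natr1 => *; lra.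
  by rewrite state0 ?scaler0 ?mul0n ?muln0 ?mulr0 ?scale0r // /admissible h /= ?andbF.
case: f hf => [|f] hf.
  have h : k23 j1 j2 j3 j4 (S - 1) T = -1 by move: ha hb hc hd he hf; rewrite /k12 /k34 /k13 /k24 /k14 /k23 /Utot -?natr1 => *; lra.
  by rewrite state0 ?scaler0 ?mul0n ?muln0 ?mulr0 ?scale0r // /admissible h /= ?andbF.
have -> : state R j1 j2 j3 j4 (S - 1) T = coefN a.+1 b.+1 c d e f *: mono R a.+1 b.+1 c d e f.
  by apply: state_mono; move: ha hb hc hd he hf; rewrite /k12 /k34 /k13 /k24 /k14 /k23 /Utot -?natr1 => *; lra.
by rewrite scalerA -coef_ab mulrC.
Qed.

End S.

Ltac toP2 := rewrite -!mul_mpolyC ?(rmorphB, rmorphD, rmorphN, rmorphM, mpolyC_nat).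

Lemma twoJJ_scale (R : numFieldType) i j (k : R) (p : {mpoly R[8]}) :
  twoJJ i j (k *: p) = k *: twoJJ i j p.
Proof.
by rewrite /twoJJ !Eop_scale !scalerBr !scalerA (mulrC k).
Qed.

Lemma diag_rat (j1 j2 j3 j4 S T : rat) (a b c d e f : nat) :
  k12 j1 j2 j3 j4 S T = a%:R -> k34 j1 j2 j3 j4 S T = b%:R ->
  k13 j1 j2 j3 j4 S T = c%:R -> k24 j1 j2 j3 j4 S T = d%:R ->
  k14 j1 j2 j3 j4 S T = e%:R -> k23 j1 j2 j3 j4 S T = f%:R ->
  S * (S + 1) - j1 * (j1 + 1) - j2 * (j2 + 1) =
  ((c * f.+1 + e * d.+1)%:R - 2^-1 * ((a + d + f) * (a + c + e))%:R - (a + c + e)%:R)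
  + (e * f)%:R + (c * d)%:R.
Proof.
move=> ha hb hc hd he hf.
have hj1 : j1 = (a + c + e)%:R / 2.
  move: ha hb hc hd he hf; rewrite /k12 /k34 /k13 /k24 /k14 /k23 /Utot !natrD => *; lra.
have hj2 : j2 = (a + d + f)%:R / 2.
  move: ha hb hc hd he hf; rewrite /k12 /k34 /k13 /k24 /k14 /k23 /Utot !natrD => *; lra.
have hS : S = (c + d + e + f)%:R / 2.
  move: ha hb hc hd he hf; rewrite /k12 /k34 /k13 /k24 /k14 /k23 /Utot !natrD => *; lra.
rewrite hj1 hj2 hS -!natr1 !natrD !natrM -!natr1; by field.
Qed.

Lemma diag_R (R : numFieldType) (j1 j2 j3 j4 S T : rat) (a b c d e f : nat) :
  k12 j1 j2 j3 j4 S T = a%:R -> k34 j1 j2 j3 j4 S T = b%:R ->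
  k13 j1 j2 j3 j4 S T = c%:R -> k24 j1 j2 j3 j4 S T = d%:R ->
  k14 j1 j2 j3 j4 S T = e%:R -> k23 j1 j2 j3 j4 S T = f%:R ->
  ratr (S * (S + 1) - j1 * (j1 + 1) - j2 * (j2 + 1)) =
  ((c * f.+1 + e * d.+1)%:R - 2^-1 * ((a + d + f) * (a + c + e))%:R - (a + c + e)%:R)
  + (e * f)%:R + (c * d)%:R :> R.
Proof.
move=> ha hb hc hd he hf; rewrite (@diag_rat j1 j2 j3 j4 S T a b c d e f ha hb hc hd he hf).
have rD (x y : rat) : ratr (x + y) = ratr x + ratr y :> R by rewrite rmorphD.
have rN (x : rat) : ratr (- x) = - ratr x :> R by rewrite rmorphN.
have rM (x y : rat) : ratr (x * y) = ratr x * ratr y :> R by rewrite rmorphM.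
have rV (x : rat) : ratr (x^-1) = (ratr x)^-1 :> R by rewrite fmorphV.
have rn (n : nat) : ratr n%:R = n%:R :> R by rewrite ratr_nat.
by rewrite !rD !rN !rM rV !rn.
Qed.

Theorem mainTheorem9 (R : numFieldType) (j1 j2 j3 j4 S T : rat) :
  (* spins: nonnegative half-integers with integer total J *)
  (2 * j1 \is a Num.nat) -> (2 * j2 \is a Num.nat) ->
  (2 * j3 \is a Num.nat) -> (2 * j4 \is a Num.nat) ->
  (j1 + j2 + j3 + j4 \is a Num.int) ->
  admissible j1 j2 j3 j4 S T ->
  let st := state R j1 j2 j3 j4 in
  let r : rat -> R := ratr in
  let a14 := k14 j1 j2 j3 j4 S T in let a23 := k23 j1 j2 j3 j4 S T in
  let a13 := k13 j1 j2 j3 j4 S T in let a24 := k24 j1 j2 j3 j4 S T in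
  [/\ twoJJ 0 1 (st S T) =
        r (S * (S + 1) - j1 * (j1 + 1) - j2 * (j2 + 1)) *: st S T
        + (r ((a14 + 1) * (a23 + 1)) *: st S (T + 1) - r (a14 * a23) *: st S T)
        + (r ((a13 + 1) * (a24 + 1)) *: st S (T - 1) - r (a13 * a24) *: st S T),
      (* J1.J2 does not change S *)
      exists s : seq (rat * R),
        2^-1 *: twoJJ 0 1 (st S T) = \sum_(p <- s) p.2 *: st S p.1
    & (* J1.J3 does not change T *)
      exists s : seq (rat * R),
        2^-1 *: twoJJ 0 2 (st S T) = \sum_(p <- s) p.2 *: st p.1 T].
Proof.
move=> _ _ _ _ _ hadm st r a14 a23 a13 a24.
rewrite /st /r /a14 /a23 /a13 /a24 {st r a14 a23 a13 a24}.
move: (hadm); rewrite /admissible => /and5P [/natrP[a ha] /natrP[b hb] /natrP[c hc]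
   /natrP[d hd] /andP[/natrP[e he] /natrP[f hf]]].
have hst := state_mono R _ _ _ _ _ _ _ _ _ _ _ _ ha hb hc hd he hf.
have hTp := shiftTp R _ _ _ _ _ _ _ _ _ _ _ _ ha hb hc hd he hf.
have hTm := shiftTm R _ _ _ _ _ _ _ _ _ _ _ _ ha hb hc hd he hf.
have hSp := shiftSp R _ _ _ _ _ _ _ _ _ _ _ _ ha hb hc hd he hf.
have hSm := shiftSm R _ _ _ _ _ _ _ _ _ _ _ _ ha hb hc hd he hf.
have hD := diag_R R _ _ _ _ _ _ _ _ _ _ _ _ ha hb hc hd he hf.
have rn (n : nat) : ratr n%:R = n%:R :> R by rewrite ratr_nat.
have p1 : twoJJ 0 1 (state R j1 j2 j3 j4 S T) =
        ratr (S * (S + 1) - j1 * (j1 + 1) - j2 * (j2 + 1)) *: state R j1 j2 j3 j4 S T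
        + (ratr ((k14 j1 j2 j3 j4 S T + 1) * (k23 j1 j2 j3 j4 S T + 1)) *: state R j1 j2 j3 j4 S (T + 1)
           - ratr (k14 j1 j2 j3 j4 S T * k23 j1 j2 j3 j4 S T) *: state R j1 j2 j3 j4 S T)
        + (ratr ((k13 j1 j2 j3 j4 S T + 1) * (k24 j1 j2 j3 j4 S T + 1)) *: state R j1 j2 j3 j4 S (T - 1)
           - ratr (k13 j1 j2 j3 j4 S T * k24 j1 j2 j3 j4 S T) *: state R j1 j2 j3 j4 S T).
  rewrite hTp hTm hD he hf hc hd -!natrM !rn hst twoJJ_scale L01.
  toP2.
  move: (mono _ _ _ _ _ _) (mono _ _ _ _ _ _) (mono _ _ _ _ _ _) => m1 m2 m3.
  ring.
split => //.
  exists [:: (T, 2^-1 * (ratr (S * (S + 1) - j1 * (j1 + 1) - j2 * (j2 + 1))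
             - ratr (k14 j1 j2 j3 j4 S T * k23 j1 j2 j3 j4 S T)
             - ratr (k13 j1 j2 j3 j4 S T * k24 j1 j2 j3 j4 S T)));
     (T + 1, 2^-1 * ratr ((k14 j1 j2 j3 j4 S T + 1) * (k23 j1 j2 j3 j4 S T + 1)));
     (T - 1, 2^-1 * ratr ((k13 j1 j2 j3 j4 S T + 1) * (k24 j1 j2 j3 j4 S T + 1)))].
  rewrite !big_cons big_nil /= p1.
  rewrite -!scalerA.
  toP2; ring.
exists [:: (S, 2^-1 * ((a * f.+1 + e * b.+1)%:R - 2^-1 * ((b + c + f) * (a + c + e))%:R - (a + c + e)%:R));
   (S + 1, (- 2^-1) * ratr ((k14 j1 j2 j3 j4 S T + 1) * (k23 j1 j2 j3 j4 S T + 1)));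
   (S - 1, (- 2^-1) * ratr ((k12 j1 j2 j3 j4 S T + 1) * (k34 j1 j2 j3 j4 S T + 1)))].
have hSp' := congr1 (fun v => (- 2^-1 : R) *: v) hSp; rewrite /= scalerA in hSp'.
have hSm' := congr1 (fun v => (- 2^-1 : R) *: v) hSm; rewrite /= scalerA in hSm'.
rewrite !big_cons big_nil /= hSp' hSm' hst twoJJ_scale L02.
toP2.
move: (mono _ _ _ _ _ _) (mono _ _ _ _ _ _) (mono _ _ _ _ _ _) => m1 m2 m3.
ring.
Qed.
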